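(* Let $\sigma\colon S\curvearrowright A$ be an algebraic action satisfying the standing assumptions, with globalization $\tilde\sigma\colon\mathscr S\curvearrowright\mathscr A$ such that $\mathscr A$ is generated by $\bigcup_{g\in\mathscr S}\tilde\sigma_g(A)$. Let $\mathbb I=\{[A:C]:C\in\mathcal C\}$ and let $\mathbb Z[\mathbb I^{-1}]$ be the subring of $\mathbb Q$ generated by $\mathbb Z$ and $\{1/n:n\in\mathbb I\}$. Then the canonical map $\mathbb Z[\mathbb I^{-1}]\otimes A\to\mathbb Z[\mathbb I^{-1}]\otimes\mathscr A$, $1\otimes x\mapsto1\otimes x$, is an isomorphism.
   Context: Algebraic action $\sigma\colon S\curvearrowright A$: left cancellative monoid $S$, abelian group $A$, monoid homomorphism $s\mapsto\sigma_s$ into injective endomorphisms of $A$. Constructible subgroups $\mathcal C$: smallest family of subgroups of $A$ containing $A$ and closed under $C\mapsto\sigma_s(C)$ and $C\mapsto\sigma_s^{-1}C=\{a\in A:\sigma_s(a)\in C\}$. Standing assumptions: $\sigma$ faithful, non-automorphic unless $S$ is a group, satisfies (FI): $[A:\sigma_s(A)]<\infty$ for all $s\in S$ (so all $C\in\mathcal C$ have finite index), and has a globalization: a group $\mathscr S\supseteq S$ generated by $S$, an abelian group $\mathscr A\supseteq A$, and an action $\tilde\sigma$ of $\mathscr S$ on $\mathscr A$ by automorphisms with $\tilde\sigma_s|_A=\sigma_s$ for $s\in S$, satisfying (JF): if $C\in\mathcal C$, $g\in\mathscr S$ and $\tilde\sigma_g$ fixes $C$ pointwise, then $g=1$. *)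

(* Defs.v *)
From HB Require Import structures.
From mathcomp Require Import all_boot all_order all_algebra.
Set Implicit Arguments. Unset Strict Implicit. Unset Printing Implicit Defensive.
Import GRing.Theory.
Local Open Scope ring_scope.

Definition index_eq (M : zmodType) (C : M -> Prop) (n : nat) : Prop :=
  exists r : seq M, [/\ size r = n,
    (forall i j, (i < n)%N -> (j < n)%N -> C (nth 0 r i - nth 0 r j)%R -> i = j)
  & (forall a : M, exists2 i, (i < n)%N & C (a - nth 0 r i)%R)].

Inductive cgen (S A : Type) (sigma : S -> A -> A) : (A -> Prop) -> Prop :=
| cg_top : cgen sigma (fun _ => True)
| cg_img (s : S) (C : A -> Prop) :
    cgen sigma C -> cgen sigma (fun a => exists2 c, C c & a = sigma s c)
| cg_pre (s : S) (C : A -> Prop) :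
    cgen sigma C -> cgen sigma (fun a => C (sigma s a)).

(* membership in the family C (subsets identified up to extensional equality) *)
Definition constructible (S A : Type) (sigma : S -> A -> A) (C : A -> Prop) :=
  exists2 D, cgen sigma D & forall a, C a <-> D a.

Definition index_set (S : Type) (A : zmodType) (sigma : S -> A -> A) (n : nat) :=
  exists2 C, constructible sigma C & index_eq C n.

Inductive subring_gen (X : rat -> Prop) : rat -> Prop :=
| sg_int (z : int) : subring_gen X (z%:~R)
| sg_gen (x : rat) : X x -> subring_gen X x
| sg_add (x y : rat) : subring_gen X x -> subring_gen X y -> subring_gen X (x + y)
| sg_opp (x : rat) : subring_gen X x -> subring_gen X (- x)
| sg_mul (x y : rat) : subring_gen X x -> subring_gen X y -> subring_gen X (x * y).

Definition Zinv (I : nat -> Prop) : rat -> Prop :=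
  subring_gen (fun q => exists2 n, I n & q = (n%:R)^-1).

(* Elements of R (x) M are represented by finite formal sums
   [:: (q_1, x_1); ...; (q_k, x_k)] (q_i in R) standing for
   sum_i q_i (x) x_i; R (x) M is the quotient of the free commutative monoid on
   R x M by the congruence [tens R] generated by bi-additivity and
   0 (x) x = 0.  (This quotient is a group -- the inverse of q (x) x is
   (-q) (x) x -- and it has the universal property of the tensor product.) *)
Fixpoint Rlist (R : rat -> Prop) (M : Type) (l : seq (rat * M)) : Prop :=
  if l is p :: l' then R p.1 /\ Rlist R l' else True.

Inductive tens (R : rat -> Prop) (M : zmodType) :
    seq (rat * M) -> seq (rat * M) -> Prop :=
| te_refl l : Rlist R l -> tens R l l
| te_sym l l' : tens R l l' -> tens R l' l
| te_trans l1 l2 l3 : tens R l1 l2 -> tens R l2 l3 -> tens R l1 l3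
| te_cat l1 l1' l2 l2' :
    tens R l1 l1' -> tens R l2 l2' -> tens R (l1 ++ l2) (l1' ++ l2')
| te_comm l1 l2 :
    Rlist R l1 -> Rlist R l2 ->
    tens R (l1 ++ l2) (l2 ++ l1)
| te_addl (q1 q2 : rat) (x : M) : R q1 -> R q2 ->
    tens R [:: (q1 + q2, x)] [:: (q1, x); (q2, x)]
| te_addr (q : rat) (x y : M) : R q ->
    tens R [:: (q, x + y)] [:: (q, x); (q, y)]
| te_zero (x : M) : R 0 -> tens R [:: (0, x)] [::].


Definition tens_map (M N : Type) (f : M -> N) (l : seq (rat * M)) :
  seq (rat * N) := map (fun p => (p.1, f p.2)) l.

(* id_R (x) f is an isomorphism (it is a well-defined additive map; being an
   isomorphism means being bijective on the quotients) *)
Definition tens_map_iso (R : rat -> Prop) (M N : zmodType) (f : M -> N) : Prop :=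
  (forall l l' : seq (rat * M), Rlist R l -> Rlist R l' ->
      tens R (tens_map f l) (tens_map f l') -> tens R l l')
  /\ (forall m : seq (rat * N), Rlist R m ->
      exists2 l : seq (rat * M), Rlist R l & tens R (tens_map f l) m).

Inductive ggen (G : groupType) (X : G -> Prop) : G -> Prop :=
| gg_one : ggen X 1%g
| gg_gen x : X x -> ggen X x
| gg_mul x y : ggen X x -> ggen X y -> ggen X (x * y)%g
| gg_inv x : ggen X x -> ggen X (x^-1)%g.

Inductive zgen (M : zmodType) (X : M -> Prop) : M -> Prop :=
| zg_zero : zgen X 0%R
| zg_gen x : X x -> zgen X x
| zg_add x y : zgen X x -> zgen X y -> zgen X (x + y)%R
| zg_opp x : zgen X x -> zgen X (- x)%R.

(* Main.v *)
Require Import Defs.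
From HB Require Import structures.
From mathcomp Require Import all_boot all_order all_algebra.
Import GRing.Theory.
From Stdlib Require Import IndefiniteDescription.
From mathcomp Require Import ring.
Import GRing.Theory Num.Theory.
Set Implicit Arguments. Unset Strict Implicit.

Section Helpers.
Local Open Scope ring_scope.

Lemma index_mul (M : zmodType) (C : M -> Prop) (C0 : C 0)
  (CB : forall x y, C x -> C y -> C (x - y)) n :
  index_eq C n -> forall a, C (a *+ n).
Proof.
case=> r [_ Hinj Hcov] a.
have Hf : forall i : 'I_n, exists j : 'I_n, C (a + nth 0 r i - nth 0 r j).
  move=> i; case: (Hcov (a + nth 0 r i)) => j jn Cj; by exists (Ordinal jn).
pose f i := proj1_sig (constructive_indefinite_description _ (Hf i)).
have Cf (i : 'I_n) : C (a + nth 0 r i - nth 0 r (f i)) :=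
  proj2_sig (constructive_indefinite_description _ (Hf i)).
have finj : injective f.
  move=> i i' e; apply: val_inj; apply: Hinj (ltn_ord i) (ltn_ord i') _.
  have := CB _ _ (Cf i) (Cf i'); rewrite e.
  by rewrite opprB addrA subrK opprD addrACA subrr add0r.
have CD x y : C x -> C y -> C (x + y).
  move=> Cx Cy; have := CB _ _ Cx (CB _ _ C0 Cy); by rewrite sub0r opprK.
have Csum : C (\sum_(i < n) (a + nth 0 r i - nth 0 r (f i))).
  by apply: big_ind => //.
move: Csum; rewrite sumrB big_split /= sumr_const card_ord.
rewrite -(reindex_inj finj (P := xpredT) (F := fun i : 'I_n => nth 0 r i)) /=. by rewrite addrK.
Qed.

Variable R : rat -> Prop.
Hypothesis HRadd : forall x y, R x -> R y -> R (x + y).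
Hypothesis HRmul : forall x y, R x -> R y -> R (x * y).
Hypothesis HRnat : forall k : nat, R k%:R.

Lemma scaling (M : zmodType) (r : rat) (x : M) k : R r ->
  tens R [:: (r, x *+ k.+1)] [:: (r * k.+1%:R, x)].
Proof.
move=> Rr; elim: k => [|k IH].
  by rewrite mulr1n mulr1; apply: te_refl.
rewrite mulrS.
apply: te_trans (te_addr _ _ Rr) _.
apply: te_trans (te_cat (te_refl (l := [:: (r, x)]) (conj Rr I)) IH) _.
apply: te_sym.
rewrite [k.+2%:R]mulrS mulrDr mulr1.
exact: (te_addl x Rr (HRmul Rr (HRnat k.+1))).
Qed.

Lemma scaling' (M : zmodType) (r : rat) (x : M) m : (0 < m)%N -> R r ->
  tens R [:: (r, x *+ m)] [:: (r * m%:R, x)].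
Proof. by case: m => // m _; apply: scaling. Qed.

Variables (M N : zmodType) (f : {additive M -> N}) (f_inj : injective f).
Variable ch : N -> nat * M.
Hypothesis Hch : forall b, [/\ (0 < (ch b).1)%N, R ((ch b).1%:R^-1) &
   b *+ (ch b).1 = f (ch b).2].

Definition phi (l : seq (rat * N)) : seq (rat * M) :=
  map (fun p => (p.1 / (ch p.2).1%:R, (ch p.2).2)) l.

Lemma Rlist_phi l : Rlist R l -> Rlist R (phi l).
Proof.
elim: l => //= p l IH [Rp Rl]; split; last exact: IH.
by apply: HRmul => //; case: (Hch p.2).
Qed.

Lemma Rdiv q b : R q -> R (q / (ch b).1%:R).
Proof. by move=> Rq; apply: HRmul => //; case: (Hch b). Qed.

Lemma chne0 b : ((ch b).1%:R : rat) != 0.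
Proof. by case: (Hch b) => h _ _; rewrite pnatr_eq0 -lt0n. Qed.

Lemma head_equiv (K : zmodType) (q : rat) (m : nat) (x : K) : (0 < m)%N -> R (q / m%:R) ->
  tens R [:: (q / m%:R, x *+ m)] [:: (q, x)].
Proof.
case: m => // m _ Rq.
have := scaling x m Rq. rewrite mulfVK //.
by rewrite pnatr_eq0.
Qed.

Lemma phi_resp l l' : tens R l l' -> tens R (phi l) (phi l').
Proof.
elim=> {l l'}.
- by move=> l Rl; apply: te_refl; apply: Rlist_phi.
- by move=> l l' _ IH; apply: te_sym.
- by move=> l1 l2 l3 _ IH1 _ IH2; apply: te_trans IH2.
- by move=> l1 l1' l2 l2' _ IH1 _ IH2; rewrite /phi !map_cat; apply: te_cat.
- by move=> l1 l2 R1 R2; rewrite /phi !map_cat; apply: te_comm; apply: Rlist_phi.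
- move=> q1 q2 x R1 R2 /=; rewrite mulrDl; apply: te_addl; exact: Rdiv.
- move=> q x y Rq /=.
  case: (Hch (x + y)) (Hch x) (Hch y).
  move: (ch (x + y)) (ch x) (ch y) => [m3 a3] [m1 a1] [m2 a2] /= h3 R3 e3 [h1 R1 e1] [h2 R2 e2].
  pose MM := (m1 * m2 * m3)%N.
  have RM : R (q / MM%:R) by rewrite /MM !natrM !invfM !mulrA; do !apply: HRmul.
  have hM : (0 < MM)%N by rewrite /MM !muln_gt0 h1 h2 h3.
  have ne1 : (m1%:R : rat) != 0 by rewrite pnatr_eq0 -lt0n.
  have ne2 : (m2%:R : rat) != 0 by rewrite pnatr_eq0 -lt0n.
  have ne3 : (m3%:R : rat) != 0 by rewrite pnatr_eq0 -lt0n.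
  have E3 : q / MM%:R * (m1 * m2)%:R = q / m3%:R.
    by rewrite /MM !natrM; field; rewrite ne1 ne2 ne3.
  have E1 : q / MM%:R * (m2 * m3)%:R = q / m1%:R.
    by rewrite /MM !natrM; field; rewrite ne1 ne2 ne3.
  have E2 : q / MM%:R * (m1 * m3)%:R = q / m2%:R.
    by rewrite /MM !natrM; field; rewrite ne1 ne2 ne3.
  have key : a3 *+ (m1 * m2) = a1 *+ (m2 * m3) + a2 *+ (m1 * m3).
    apply: f_inj; rewrite raddfD !raddfMn -e3 -e1 -e2 -!mulrnA mulrnDl.
    by congr (_ + _); congr (_ *+ _); ring.
  have p12 : (0 < m1 * m2)%N by rewrite muln_gt0 h1 h2.
  have p23 : (0 < m2 * m3)%N by rewrite muln_gt0 h2 h3.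
  have p13 : (0 < m1 * m3)%N by rewrite muln_gt0 h1 h3.
  have T3 := scaling' a3 p12 RM; rewrite E3 key in T3.
  have T1 := scaling' a1 p23 RM; rewrite E1 in T1.
  have T2 := scaling' a2 p13 RM; rewrite E2 in T2.
  apply: te_trans (te_sym T3) _.
  apply: te_trans (te_addr _ _ RM) _.
  exact: (te_cat T1 T2).
- by move=> x R0 /=; rewrite mul0r; apply: te_zero.
Qed.

Lemma back1 l : Rlist R l -> tens R (phi (tens_map f l)) l.
Proof.
elim: l => [|[q a] l IH] /= ; first by move=> _; apply: te_refl.
case=> Rq Rl.
have -> : (q / (ch (f a)).1%:R, (ch (f a)).2) :: phi (tens_map f l) =
   [:: (q / (ch (f a)).1%:R, (ch (f a)).2)] ++ phi (tens_map f l) by [].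
have -> : (q, a) :: l = [:: (q, a)] ++ l by [].
apply: te_cat (IH Rl).
case: (Hch (f a)) => h Rm e.
have -> : (ch (f a)).2 = a *+ (ch (f a)).1 by apply: f_inj; rewrite -e raddfMn.
apply: head_equiv => //; exact: Rdiv.
Qed.

Lemma back2 l : Rlist R l -> tens R (tens_map f (phi l)) l.
Proof.
elim: l => [|[q b] l IH] /= ; first by move=> _; apply: te_refl.
case=> Rq Rl.
have -> : (q / (ch b).1%:R, f (ch b).2) :: tens_map f (phi l) =
   [:: (q / (ch b).1%:R, f (ch b).2)] ++ tens_map f (phi l) by [].
have -> : (q, b) :: l = [:: (q, b)] ++ l by [].
apply: te_cat (IH Rl).
case: (Hch b) => h Rm e.
rewrite -e; apply: head_equiv => //; exact: Rdiv.
Qed.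

Lemma iso_general : tens_map_iso R f.
Proof.
split.
- move=> l l' Rl Rl' H.
  apply: te_trans (te_sym (back1 Rl)) _.
  apply: te_trans (back1 Rl').
  exact: phi_resp.
- move=> m Rm; exists (phi m); first exact: Rlist_phi.
  exact: back2.
Qed.
End Helpers.

Unset Implicit Arguments. Set Strict Implicit.

Theorem lemma3p21
  (* the left cancellative monoid S *)
  (S : monoidType)
  (S_lcancel : forall s t u : S, (s * t = s * u)%g -> t = u)
  (* the abelian group A and the algebraic action sigma : S -> End(A) *)
  (A : zmodType) (sigma : S -> {additive A -> A})
  (sigma_inj : forall s, injective (sigma s))
  (sigma1 : forall a, sigma 1%g a = a)
  (sigmaM : forall s t a, sigma (s * t)%g a = sigma s (sigma t a))
  (* standing assumptions: faithful *)
  (sigma_faithful : forall s t, (forall a, sigma s a = sigma t a) -> s = t)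
  (* non-automorphic unless S is a group *)
  (sigma_nonaut : ~ (forall s : S, exists t, (s * t = 1)%g /\ (t * s = 1)%g) ->
       exists s, ~ (forall a, exists b, sigma s b = a))
  (* (FI) *)
  (sigma_FI : forall s, exists n, index_eq (fun a => exists b, a = sigma s b) n)
  (* globalization: a group G containing S (via the injective monoid
     homomorphism j) and generated by S *)
  (G : groupType) (j : S -> G) (j_inj : injective j)
  (j1 : j 1%g = 1%g) (jM : forall s t, j (s * t)%g = (j s * j t)%g)
  (G_gen : forall g : G, ggen (fun h => exists s, h = j s) g)
  (* an abelian group B containing A (via the injective additive map iota) *)
  (B : zmodType) (iota : {additive A -> B}) (iota_inj : injective iota)
  (* an action tau of G on B by automorphisms *)
  (tau : G -> {additive B -> B}) (tau_bij : forall g, bijective (tau g))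
  (tau1 : forall b, tau 1%g b = b)
  (tauM : forall g h b, tau (g * h)%g b = tau g (tau h b))
  (* extending sigma *)
  (tau_ext : forall s a, tau (j s) (iota a) = iota (sigma s a))
  (* (JF) *)
  (JF : forall (C : A -> Prop) (g : G), constructible sigma C ->
        (forall c, C c -> tau g (iota c) = iota c) -> g = 1%g)
  (* B is generated by the union of the tau_g(A) *)
  (B_gen : forall b : B, zgen (fun x => exists g a, x = tau g (iota a)) b) :
  tens_map_iso (Zinv (index_set sigma)) iota.
Proof.
set R := Zinv _.
have HRadd : forall x y, R x -> R y -> R (x + y)%R by move=> x y; apply: sg_add.
have HRmul : forall x y, R x -> R y -> R (x * y)%R by move=> x y; apply: sg_mul.
have HRnat : forall k : nat, R k%:R%R.
  by move=> k; have := sg_int (fun q => exists2 n, index_set sigma n & q = (n%:R)^-1)%R k; rewrite -pmulrn.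
pose PA b := exists m, exists a, [/\ (0 < m)%N, R (m%:R^-1)%R & (b *+ m)%R = iota a].
have PA_mul : forall m1 m2 : nat, (0 < m1)%N -> R (m1%:R^-1)%R -> (0 < m2)%N -> R (m2%:R^-1)%R ->
    (0 < m1 * m2)%N /\ R ((m1 * m2)%:R^-1)%R.
  move=> m1 m2 h1 r1 h2 r2; split; first by rewrite muln_gt0 h1 h2.
  by rewrite natrM invfM; apply: HRmul.
have PA_iota : forall a, PA (iota a).
  by move=> a; exists 1%N, a; split => //; rewrite ?invr1 ?mulr1n //; apply: (HRnat 1%N).
pose Q g := forall a, PA (tau g (iota a)).
have PA_tau : forall x b, Q x -> PA b -> PA (tau x b).
  move=> x b Qx [m [a [h r e]]].
  case: (Qx a) => m' [a' [h' r' e']].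
  case: (PA_mul _ _ h r h' r') => hh rr.
  exists (m * m')%N, a'; split => //.
  by rewrite mulrnA -(raddfMn (tau x)) e.
have Qgen : forall s, Q (j s) /\ Q (j s)^-1%g.
  move=> s; split.
    by move=> a; rewrite tau_ext.
  case: (sigma_FI s) => n Hn.
  have npos : (0 < n)%N.
    by case: Hn => r [_ _ Hcov]; case: (Hcov 0%R) => i lt _; apply: leq_ltn_trans lt.
  have Rn : R (n%:R^-1)%R.
    apply: sg_gen; exists n => //.
    exists (fun a => exists b, a = sigma s b) => //.
    exists (fun a => exists2 c, True & a = sigma s c); first exact: (cg_img s (cg_top _)).
    by move=> a; split; [case=> b ->; exists b | case=> b _ ->; exists b].
  have Hm := index_mul (C := fun a => exists b, a = sigma s b) _ _ Hn.
  move=> a.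
  case: (Hm (ex_intro _ 0%R (esym (raddf0 _))) _ a).
    by move=> x y [b1 ->] [b2 ->]; exists (b1 - b2)%R; rewrite raddfB.
  move=> a'' e.
  exists n, a''; split => //.
  by rewrite -raddfMn -raddfMn e -tau_ext -tauM mulVg tau1.
have Qall : forall g, ggen (fun h => exists s, h = j s) g -> Q g /\ Q g^-1%g.
  move=> g; elim => {g}.
  - by rewrite invg1; split => a; rewrite tau1.
  - by move=> x [s ->]; apply: Qgen.
  - move=> x y _ [Qx Qx'] _ [Qy Qy']; split.
      by move=> a; rewrite tauM; apply: PA_tau.
    by move=> a; rewrite invgM tauM; apply: PA_tau.
  - by move=> x _ [Qx Qx']; rewrite invgK.
have PAall : forall b, PA b.
  move=> b; elim: (B_gen b) => {b}.
  - by rewrite -(raddf0 iota).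
  - by move=> x [g [a ->]]; case: (Qall g (G_gen g)) => Qg _; apply: Qg.
  - move=> x y _ [m1 [a1 [h1 r1 e1]]] _ [m2 [a2 [h2 r2 e2]]].
    case: (PA_mul _ _ h1 r1 h2 r2) => hh rr.
    exists (m1 * m2)%N, (a1 *+ m2 + a2 *+ m1)%R; split => //.
    rewrite mulrnDl raddfD !raddfMn -e1 -e2 -!mulrnA.
    by rewrite [(m2 * m1)%N]mulnC.
  - move=> x _ [m [a [h r e]]]; exists m, (- a)%R; split => //.
    by rewrite mulNrn raddfN e.
have Hex : forall b, exists p : nat * A,
   [/\ (0 < p.1)%N, R (p.1%:R^-1)%R & (b *+ p.1)%R = iota p.2].
  by move=> b; case: (PAall b) => m [a H]; exists (m, a).
pose ch b := proj1_sig (constructive_indefinite_description _ (Hex b)).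
have Hch : forall b, [/\ (0 < (ch b).1)%N, R ((ch b).1%:R^-1)%R & ((b *+ (ch b).1)%R = iota (ch b).2)].
  by move=> b; exact: (proj2_sig (constructive_indefinite_description _ (Hex b))).
exact: (iso_general HRmul HRnat iota_inj Hch).
Qed.
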